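(* Let $\eta\in(0,1)$, $T\ge 1$, and let $\ell_1,\dots,\ell_T\in[-1,1]^K$ be an arbitrary loss sequence fixed in advance. Then LB-Prod (defined in the context) produces, at every round $t$, a probability vector $\pi_t$ in the simplex with all entries strictly positive, and for every $i^*\in[K]$, $$\sum_{t=1}^T\mathbb{E}\big[\ell_{t,A_t}-\ell_{t,i^*}\big]\le 2+\frac{K\log T}{\eta}+\frac{2\eta T}{1-\eta}.$$
   Context: Bandit setting: in each round $t$ the learner picks $A_t\in[K]$ and observes only $\ell_{t,A_t}$; expectations are over the learner's randomness. LB-Prod with parameter $\eta\in(0,1)$: set $\pi_{1,i}=1/K$. In round $t$: draw $A_t\sim\pi_t$, observe $\ell_{t,A_t}$; set $\tilde\ell_{t,i}=\ell_{t,i}\mathbb{I}(A_t=i)$; $$\lambda_{t,i}=\frac{\pi_{t,i}\sum_{j=1}^K\pi_{t,j}\tilde\ell_{t,j}}{\sum_{j=1}^K\pi_{t,j}^2}=\frac{\pi_{t,i}\pi_{t,A_t}\ell_{t,A_t}}{\sum_{j=1}^K\pi_{t,j}^2};$$ and update $\pi_{t+1,i}=\pi_{t,i}\big(1-\eta(\tilde\ell_{t,i}-\lambda_{t,i})\big)$ for all $i\in[K]$. *)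

(* Defs.v *)
From HB Require Import structures.
From mathcomp Require Import all_boot all_order all_algebra.
From mathcomp Require Import reals exp.
Set Implicit Arguments. Unset Strict Implicit. Unset Printing Implicit Defensive.
Import Order.TTheory GRing.Theory Num.Theory.
Local Open Scope ring_scope.

Section LBProd.
Variables (R : realType) (K : nat) (eta : R) (loss : nat -> 'I_K -> R).

Definition lb_init : 'I_K -> R := fun _ => (K%:R)^-1.

Definition lb_update (t : nat) (p : 'I_K -> R) (a : 'I_K) : 'I_K -> R :=
  let ltil := fun j : 'I_K => if a == j then loss t j else 0 in
  let lam := fun i : 'I_K =>
    p i * (\sum_(j < K) p j * ltil j) / (\sum_(j < K) p j ^+ 2) in
  fun i => p i * (1 - eta * (ltil i - lam i)).

Fixpoint lb_pi_from (t0 : nat) (p : 'I_K -> R) (h : seq 'I_K) : 'I_K -> R :=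
  match h with
  | [::] => p
  | a :: h' => lb_pi_from t0.+1 (lb_update t0 p a) h'
  end.

(* pi_t as a function of the history (A_1,...,A_{t-1}), t = size h + 1. *)
Definition lb_pi (h : seq 'I_K) : 'I_K -> R := lb_pi_from 1 lb_init h.

Fixpoint lb_prob_from (t0 : nat) (p : 'I_K -> R) (h : seq 'I_K) : R :=
  match h with
  | [::] => 1
  | a :: h' => p a * lb_prob_from t0.+1 (lb_update t0 p a) h'
  end.

Definition lb_prob (h : seq 'I_K) : R := lb_prob_from 1 lb_init h.

(* E[ l_{t,A_t} - l_{t,istar} ] at round t = n.+1 (n < T), as an explicit
   expectation over the histories (A_1,...,A_{n+1}). *)
Definition lb_round_regret (n : nat) (istar : 'I_K) : R :=
  \sum_(h : (n.+1).-tuple 'I_K)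
     lb_prob h * (loss n.+1 (tnth h ord_max) - loss n.+1 istar).

Definition lb_expected_regret (T : nat) (istar : 'I_K) : R :=
  \sum_(n < T) lb_round_regret n istar.

End LBProd.

(* Main.v *)
Require Import Defs.
From HB Require Import structures.
From mathcomp Require Import all_boot all_order all_algebra.
From mathcomp Require Import reals exp.
From mathcomp Require Import ring lra.
Import Order.TTheory GRing.Theory Num.Theory.
Local Open Scope ring_scope.
Set Implicit Arguments. Unset Strict Implicit.

Lemma big_tuple_cons (R : realType) (T : finType) n (F : n.+1.-tuple T -> R) :
  \sum_(h : n.+1.-tuple T) F h = \sum_(x : T) \sum_(t : n.-tuple T) F [tuple of x :: t].
Proof.
rewrite pair_big /=.
rewrite (reindex (fun p : T * n.-tuple T => [tuple of p.1 :: p.2])) //=.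
exists (fun h : n.+1.-tuple T => (thead h, [tuple of behead h])).
  by move=> [x t] _ /=; congr pair => //; apply: val_inj.
by move=> h _; rewrite -tuple_eta.
Qed.

Lemma big_tuple0 (R : realType) (T : finType) (F : 0.-tuple T -> R) :
  \sum_(h : 0.-tuple T) F h = F [tuple].
Proof.
rewrite (eq_bigr (fun _ => F [tuple])); last by move=> h _; rewrite tuple0.
by rewrite sumr_const card_tuple expn0.
Qed.

Lemma tnth_cons_max (T : Type) n x (t : n.+1.-tuple T) :
  tnth [tuple of x :: t] ord_max = tnth t ord_max.
Proof.
have -> : (ord_max : 'I_n.+2) = lift ord0 ord_max by apply: val_inj.
by rewrite tnthS.
Qed.


Definition Msq (R : realType) K (p : 'I_K -> R) := \sum_(j < K) p j ^+ 2.
Definition zz (R : realType) K (loss : nat -> 'I_K -> R) t (p : 'I_K -> R) a i :=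
  (if a == i then loss t i else 0) - p i * (p a * loss t a / Msq p).

Lemma sum_ltil (R : realType) K (f g : 'I_K -> R) a :
  \sum_(j < K) f j * (if a == j then g j else 0) = f a * g a.
Proof.
rewrite (bigD1 a) //= eqxx big1 ?addr0 // => j /negbTE; rewrite eq_sym => ->.
by rewrite mulr0.
Qed.

Lemma upd_eq (R : realType) (K : nat) (eta : R) (loss : nat -> 'I_K -> R) t (p : 'I_K -> R) a i :
  lb_update eta loss t p a i = p i * (1 - eta * zz loss t p a i).
Proof.
rewrite /lb_update /zz /Msq /=. by rewrite sum_ltil -mulrA.
Qed.

Lemma Msq_ge (R : realType) K (p : 'I_K -> R) a : p a ^+ 2 <= Msq p.
Proof.
rewrite /Msq (bigD1 a) //= lerDl sumr_ge0 // => j _; exact: sqr_ge0.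
Qed.

Lemma zz_le1 (R : realType) K (loss : nat -> 'I_K -> R) t p a i :
  (forall j, 0 < p j) -> -1 <= loss t a <= 1 -> zz loss t p a i <= 1.
Proof.
move=> pp /andP[l1 l2].
have Ma := Msq_ge p a; have Mi := Msq_ge p i.
have pa := pp a; have pi := pp i.
have M0 : 0 < Msq p by apply: lt_le_trans Ma; exact: exprn_gt0.
rewrite /zz; case: eqP => [<-|_].
  have -> : p a * (p a * loss t a / Msq p) = (p a ^+ 2 / Msq p) * loss t a.
    by rewrite expr2; ring.
  have h : p a ^+ 2 / Msq p <= 1 by rewrite ler_pdivrMr // mul1r.
  have h0 : 0 <= p a ^+ 2 / Msq p by rewrite divr_ge0 // ?sqr_ge0 // ltW.
  nra.
have h : p i * p a <= Msq p.
  have : (p i * p a) ^+ 2 <= Msq p ^+ 2.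
    rewrite exprMn; apply: (le_trans (ler_wpM2r (sqr_ge0 _) Mi)).
    by rewrite expr2 ler_wpM2l // ltW.
  by rewrite ler_sqr // ?nnegrE ?(ltW M0) // mulr_ge0 // ltW.
have h' : p i * (p a * loss t a / Msq p) = (p i * p a / Msq p) * loss t a.
  by rewrite !mulrA mulrAC.
have q1 : p i * p a / Msq p <= 1 by rewrite ler_pdivrMr // mul1r.
have q0 : 0 <= p i * p a / Msq p by rewrite divr_ge0 // ?mulr_ge0 // ltW.
rewrite h' sub0r; nra.
Qed.

Lemma Msq_gt0 (R : realType) K (p : 'I_K -> R) (a : 'I_K) : (forall j, 0 < p j) -> 0 < Msq p.
Proof. by move=> pp; apply: lt_le_trans (Msq_ge p a); exact: exprn_gt0. Qed.

Lemma upd_pos (R : realType) (K : nat) (eta : R) (loss : nat -> 'I_K -> R) t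
  (p : 'I_K -> R) a : (forall j, 0 < p j) -> 0 < eta < 1 -> -1 <= loss t a <= 1 ->
  forall i, 0 < lb_update eta loss t p a i.
Proof.
move=> pp /andP[e0 e1] hl i; rewrite upd_eq mulr_gt0 //.
have := zz_le1 i pp hl; nra.
Qed.

Lemma upd_sum (R : realType) (K : nat) (eta : R) (loss : nat -> 'I_K -> R) t
  (p : 'I_K -> R) a : (forall j, 0 < p j) -> \sum_i p i = 1 ->
  \sum_i lb_update eta loss t p a i = 1.
Proof.
move=> pp s1.
have M0 := Msq_gt0 a pp.
rewrite (eq_bigr (fun i => p i - eta * (p i * zz loss t p a i))); last first.
  by move=> i _; rewrite upd_eq; ring.
rewrite sumrB -mulr_sumr s1.
suff -> : \sum_i p i * zz loss t p a i = 0 by rewrite mulr0 subr0.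
rewrite /zz (eq_bigr (fun i => p i * (if a == i then loss t i else 0)
   - p i ^+ 2 * (p a * loss t a / Msq p))); last first.
  by move=> i _; rewrite expr2; ring.
rewrite sumrB sum_ltil -mulr_suml -/(Msq p).
by rewrite [Msq p * _]mulrC divfK ?gt_eqF // subrr.
Qed.


Lemma pi_from_ok (R : realType) (K : nat) (eta : R) (loss : nat -> 'I_K -> R)
  (he : 0 < eta < 1) (h : seq 'I_K) : forall t0 (p : 'I_K -> R),
  (forall j, 0 < p j) -> \sum_i p i = 1 ->
  (forall k i, (k < size h)%N -> -1 <= loss (t0 + k)%N i <= 1) ->
  (forall j, 0 < lb_pi_from eta loss t0 p h j) /\ \sum_i lb_pi_from eta loss t0 p h i = 1.
Proof.
elim: h => [|a h IH] t0 p pp s1 hb /=; first by [].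
apply: IH.
- apply: upd_pos => //; have := hb 0%N a isT; by rewrite addn0.
- exact: upd_sum.
- by move=> k i hk; rewrite addSnnS; apply: hb.
Qed.

Lemma prob_sum (R : realType) (K : nat) (eta : R) (loss : nat -> 'I_K -> R)
  (he : 0 < eta < 1) (n : nat) : forall t0 (p : 'I_K -> R),
  (forall j, 0 < p j) -> \sum_i p i = 1 ->
  (forall k i, (k < n)%N -> -1 <= loss (t0 + k)%N i <= 1) ->
  \sum_(h : n.-tuple 'I_K) lb_prob_from eta loss t0 p h = 1.
Proof.
elim: n => [|n IH] t0 p pp s1 hb; first by rewrite big_tuple0.
rewrite big_tuple_cons /=.
rewrite -[RHS]s1; apply: eq_bigr => a _.
rewrite -mulr_sumr IH ?mulr1 //.
- apply: upd_pos => //; have := hb 0%N a isT; by rewrite addn0.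
- exact: upd_sum.
- by move=> k i hk; rewrite addSnnS; apply: hb.
Qed.


Lemma inv_bound (R : realType) (eta x : R) : 0 < eta < 1 -> x <= eta ->
  (1 - x)^-1 <= 1 + x + x ^+ 2 / (1 - eta).
Proof.
move=> /andP[e0 e1] xe.
have h1 : 0 < 1 - x by lra.
have h2 : 0 < 1 - eta by lra.
have -> : (1 - x)^-1 = 1 + x + x ^+ 2 / (1 - x).
  by field; rewrite gt_eqF.
rewrite lerD2l ler_wpM2l ?sqr_ge0 // lef_pV2 ?posrE //; lra.
Qed.

Lemma ln_le_sub1 (R : realType) (y : R) : 0 < y -> ln y <= y - 1.
Proof.
move=> y0; have := @le_ln1Dx R (y - 1); rewrite addrCA subrr addr0.
by apply; lra.
Qed.

Lemma step_i (R : realType) (eta u p z : R) : 0 < eta < 1 -> 0 < u -> 0 < p ->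
  z <= 1 ->
  u / (p * (1 - eta * z)) + ln (p * (1 - eta * z)) <=
  u / p + ln p + (u / p) * (eta * z + eta ^+ 2 * z ^+ 2 / (1 - eta)) - eta * z.
Proof.
move=> he u0 p0 z1; have /andP[e0 e1] := he.
have q0 : 0 < 1 - eta * z by nra.
rewrite lnM ?posrE //.
have hl : ln (1 - eta * z) <= - (eta * z) by have := ln_le_sub1 q0; lra.
have hi := @inv_bound R eta (eta * z) he ltac:(nra).
have up : 0 <= u / p by rewrite divr_ge0 // ltW.
have -> : u / (p * (1 - eta * z)) = (u / p) * (1 - eta * z)^-1.
  by rewrite invfM mulrA.
have : u / p * (1 - eta * z)^-1 <= u / p * (1 + eta * z + (eta * z) ^+ 2 / (1 - eta)).
  exact: ler_wpM2l.
rewrite exprMn; lra.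
Qed.

Definition Phi (R : realType) K (u p : 'I_K -> R) := \sum_i (u i / p i + ln (p i)).

Lemma step_a (R : realType) (K : nat) (eta : R) (loss : nat -> 'I_K -> R) t
  (u p : 'I_K -> R) a : 0 < eta < 1 -> (forall j, 0 < u j) -> \sum_i u i = 1 ->
  (forall j, 0 < p j) -> \sum_i p i = 1 -> -1 <= loss t a <= 1 ->
  Phi u (lb_update eta loss t p a) <= Phi u p + eta * (u a * loss t a / p a - loss t a)
     + eta ^+ 2 / (1 - eta) * \sum_i (u i * zz loss t p a i ^+ 2 / p i).
Proof.
move=> he up su pp sp hl.
rewrite /Phi.
rewrite (eq_bigr (fun i => u i / (p i * (1 - eta * zz loss t p a i)) +
     ln (p i * (1 - eta * zz loss t p a i)))); last by move=> i _; rewrite upd_eq.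
apply: le_trans.
  apply: ler_sum => i _.
  exact: (step_i he (up i) (pp i) (zz_le1 i pp hl)).
have e1 : 1 - eta != 0 by case/andP: he => _ ?; rewrite gt_eqF //; lra.
rewrite (eq_bigr (fun i => (u i / p i + ln (p i)) + eta * ((u i / p i - 1) * zz loss t p a i)
   + eta ^+ 2 / (1 - eta) * (u i * zz loss t p a i ^+ 2 / p i))); last first.
  move=> i _; have := pp i; move=> /gt_eqF pi0.
  by field; rewrite e1 pi0.
rewrite !big_split /= -!mulr_sumr lerD2r lerD2l.
suff -> : \sum_(i < K) (u i / p i - 1) * zz loss t p a i = u a * loss t a / p a - loss t a by [].
rewrite /zz (eq_bigr (fun i => (u i / p i - 1) * (if a == i then loss t i else 0)
   - (u i - p i) * (p a * loss t a / Msq p))); last first.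
  move=> i _; have pi0 : p i != 0 by rewrite gt_eqF.
  move: (if a == i then loss t i else 0) => X.
  have M0 : Msq p != 0 by rewrite gt_eqF // (Msq_gt0 a pp).
  by field; rewrite M0 pi0.
rewrite sumrB sum_ltil -mulr_suml sumrB su sp subrr mul0r subr0.
by rewrite mulrBl mul1r mulrAC.
Qed.

Lemma stab_ai (R : realType) (K : nat) (loss : nat -> 'I_K -> R) t (p : 'I_K -> R) a i :
  (forall j, 0 < p j) -> -1 <= loss t a <= 1 ->
  p a * zz loss t p a i ^+ 2 / p i <= (if a == i then 1 else 0) + p a ^+ 2 / Msq p.
Proof.
move=> pp /andP[l1 l2].
have Ma := Msq_ge p a; have Mi := Msq_ge p i.
have pa := pp a; have pi := pp i.
have M0 := Msq_gt0 a pp.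
have x0 : 0 <= p a ^+ 2 / Msq p by rewrite divr_ge0 // ?sqr_ge0 // ltW.
have x1 : p a ^+ 2 / Msq p <= 1 by rewrite ler_pdivrMr // mul1r.
rewrite /zz; case: eqP => [<-|_].
  have -> : p a * (loss t a - p a * (p a * loss t a / Msq p)) ^+ 2 / p a =
     (loss t a * (1 - p a ^+ 2 / Msq p)) ^+ 2.
    by field; rewrite !gt_eqF.
  rewrite exprMn.
  have : (1 - p a ^+ 2 / Msq p) ^+ 2 <= 1.
    rewrite expr2; nra.
  have : loss t a ^+ 2 <= 1 by rewrite expr2; nra.
  move=> h1 h2; have h3 : 0 <= loss t a ^+ 2 by exact: sqr_ge0.
  have h4 : 0 <= (1 - p a ^+ 2 / Msq p) ^+ 2 by exact: sqr_ge0.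
  nra.
have h : p i * p a <= Msq p.
  have : (p i * p a) ^+ 2 <= Msq p ^+ 2.
    rewrite exprMn; apply: (le_trans (ler_wpM2r (sqr_ge0 _) Mi)).
    by rewrite expr2 ler_wpM2l // ltW.
  by rewrite ler_sqr // ?nnegrE ?(ltW M0) // mulr_ge0 // ltW.
have q1 : p i * p a / Msq p <= 1 by rewrite ler_pdivrMr // mul1r.
have q0 : 0 <= p i * p a / Msq p by rewrite divr_ge0 // ?mulr_ge0 // ltW.
have -> : p a * (0 - p i * (p a * loss t a / Msq p)) ^+ 2 / p i =
   (p i * p a / Msq p) * (p a ^+ 2 / Msq p) * loss t a ^+ 2.
  by field; rewrite !gt_eqF.
have : loss t a ^+ 2 <= 1 by rewrite expr2; nra.
have h3 : 0 <= loss t a ^+ 2 by exact: sqr_ge0.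
move=> h2; rewrite add0r.
have hh : 0 <= (p i * p a / Msq p) * (p a ^+ 2 / Msq p) by exact: mulr_ge0.
have : (p i * p a / Msq p) * (p a ^+ 2 / Msq p) <= p a ^+ 2 / Msq p.
  by rewrite -{2}(mul1r (p a ^+ 2 / Msq p)) ler_wpM2r.
nra.
Qed.

Lemma stab (R : realType) (K : nat) (loss : nat -> 'I_K -> R) t (u p : 'I_K -> R) :
  (forall j, 0 < p j) -> (forall j, 0 <= u j) -> \sum_i u i = 1 ->
  (forall a, -1 <= loss t a <= 1) ->
  \sum_a p a * \sum_i (u i * zz loss t p a i ^+ 2 / p i) <= 2.
Proof.
move=> pp up su hl.
have M0 := Msq_gt0.
rewrite (eq_bigr (fun a => \sum_i u i * (p a * zz loss t p a i ^+ 2 / p i))); last first.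
  by move=> a _; rewrite mulr_sumr; apply: eq_bigr => i _; rewrite !mulrA [p a * u i]mulrC.
rewrite exchange_big /=.
apply: (le_trans (y := \sum_i u i * 2)).
  apply: ler_sum => i _; rewrite -mulr_sumr ler_wpM2l //.
  apply: (le_trans (ler_sum _ (fun a _ => stab_ai i pp (hl a)))).
  rewrite big_split /= -mulr_suml -/(Msq p).
  rewrite divff ?gt_eqF ?(Msq_gt0 i pp) //.
  rewrite (bigD1 i) //= eqxx big1 ?addr0 //.
  by move=> a /negbTE ->.
by rewrite -mulr_suml su mul1r.
Qed.


Definition gg (R : realType) K (u : 'I_K -> R) (loss : nat -> 'I_K -> R) t a :=
  loss t a - \sum_i u i * loss t i.

Lemma one_step (R : realType) (K : nat) (eta : R) (loss : nat -> 'I_K -> R) t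
  (u p : 'I_K -> R) : 0 < eta < 1 -> (forall j, 0 < u j) -> \sum_i u i = 1 ->
  (forall j, 0 < p j) -> \sum_i p i = 1 -> (forall a, -1 <= loss t a <= 1) ->
  \sum_a p a * (gg u loss t a + Phi u (lb_update eta loss t p a) / eta)
   <= Phi u p / eta + 2 * eta / (1 - eta).
Proof.
move=> he up su pp sp hl.
have /andP[e0 e1] := he.
set U := \sum_i u i * loss t i.
set S := fun a => \sum_i (u i * zz loss t p a i ^+ 2 / p i).
apply: (le_trans (y := \sum_a (p a * (Phi u p / eta - U) + u a * loss t a
     + eta / (1 - eta) * (p a * S a)))).
  apply: ler_sum => a _.
  have h := @step_a R K eta loss t u p a he up su pp sp (hl a).
  have : Phi u (lb_update eta loss t p a) / eta <=
     Phi u p / eta + (u a * loss t a / p a - loss t a) + eta / (1 - eta) * S a.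
    rewrite ler_pdivrMr //.
    apply: (le_trans h); rewrite /S le_eqVlt; apply/orP; left; apply/eqP.
    have n1 : eta != 0 by rewrite gt_eqF.
    have n2 : 1 - eta != 0 by rewrite gt_eqF //; lra.
    have n3 : p a != 0 by rewrite gt_eqF.
    by field; rewrite n1 n2 n3.
  move=> h2.
  have pa := pp a.
  rewrite /gg -/U.
  have n3 : p a != 0 by rewrite gt_eqF.
  have n2 : 1 - eta != 0 by rewrite gt_eqF //; lra.
  have n1 : eta != 0 by rewrite gt_eqF.
  have -> : p a * (Phi u p / eta - U) + u a * loss t a + eta / (1 - eta) * (p a * S a) =
     p a * (loss t a - U + (Phi u p / eta + (u a * loss t a / p a - loss t a)
        + eta / (1 - eta) * S a)).
    by field; rewrite n1 n2 n3.
  apply: ler_wpM2l; [exact: ltW | lra].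
rewrite !big_split /= -!mulr_suml -!mulr_sumr sp mul1r.
have -> : \sum_a u a * loss t a = U by [].
have hs := @stab R K loss t u p pp (fun j => ltW (up j)) su hl.
have hc : 0 <= eta / (1 - eta) by rewrite divr_ge0 //; lra.
have : eta / (1 - eta) * \sum_a p a * S a <= eta / (1 - eta) * 2 by rewrite ler_wpM2l.
have -> : 2 * eta / (1 - eta) = eta / (1 - eta) * 2 by ring.
lra.
Qed.


Definition Ef (R : realType) (K : nat) (eta : R) (loss : nat -> 'I_K -> R)
  (g : nat -> 'I_K -> R) t0 (p : 'I_K -> R) n :=
  \sum_(h : n.+1.-tuple 'I_K) lb_prob_from eta loss t0 p h * g (t0 + n)%N (tnth h ord_max).

Lemma Ef0 (R : realType) (K : nat) (eta : R) (loss : nat -> 'I_K -> R) g t0 p :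
  Ef eta loss g t0 p 0 = \sum_a p a * g t0 a.
Proof.
rewrite /Ef big_tuple_cons; apply: eq_bigr => a _.
by rewrite big_tuple0 /= mulr1 addn0.
Qed.

Lemma EfS (R : realType) (K : nat) (eta : R) (loss : nat -> 'I_K -> R) g t0 p n :
  Ef eta loss g t0 p n.+1 = \sum_a p a * Ef eta loss g t0.+1 (lb_update eta loss t0 p a) n.
Proof.
rewrite /Ef big_tuple_cons; apply: eq_bigr => a _.
rewrite mulr_sumr; apply: eq_bigr => h _.
by rewrite tnth_cons_max /= addSnnS mulrA.
Qed.

Lemma Phi_ge (R : realType) (K : nat) (u p : 'I_K -> R) :
  (forall j, 0 < u j) -> (forall j, 0 < p j) -> \sum_i (1 + ln (u i)) <= Phi u p.
Proof.
move=> up pp; apply: ler_sum => i _.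
have := ln_le_sub1 (divr_gt0 (up i) (pp i)).
rewrite ln_div ?posrE //; lra.
Qed.

Lemma main_ind (R : realType) (K : nat) (eta : R) (loss : nat -> 'I_K -> R)
  (u : 'I_K -> R) (he : 0 < eta < 1) (up : forall j, 0 < u j) (su : \sum_i u i = 1)
  (m : nat) : forall t0 (p : 'I_K -> R),
  (forall j, 0 < p j) -> \sum_i p i = 1 ->
  (forall k i, (k < m)%N -> -1 <= loss (t0 + k)%N i <= 1) ->
  \sum_(n < m) Ef eta loss (gg u loss) t0 p n <=
   (Phi u p - \sum_i (1 + ln (u i))) / eta + m%:R * (2 * eta / (1 - eta)).
Proof.
have /andP[e0 e1] := he.
elim: m => [|m IH] t0 p pp sp hb.
  rewrite big_ord0 mul0r addr0 divr_ge0 ?(ltW e0) // subr_ge0.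
  exact: Phi_ge.
rewrite big_ord_recl /= Ef0.
rewrite (eq_bigr (fun n : 'I_m => \sum_a p a * Ef eta loss (gg u loss) t0.+1
            (lb_update eta loss t0 p a) n)); last first.
  by move=> n _; rewrite /bump /= add1n EfS.
rewrite exchange_big /= -big_split /=.
have hb0 : forall a, -1 <= loss t0 a <= 1.
  by move=> a; have := hb 0%N a isT; rewrite addn0.
set L := \sum_i (1 + ln (u i)).
set C := 2 * eta / (1 - eta).
apply: (le_trans (y := \sum_a p a * (gg u loss t0 a + Phi u (lb_update eta loss t0 p a) / eta
      + (m%:R * C - L / eta)))).
  apply: ler_sum => a _.
  rewrite -mulr_sumr -mulrDr ler_wpM2l ?(ltW (pp a)) //.
  have := IH t0.+1 (lb_update eta loss t0 p a) (upd_pos pp he (hb0 a))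
     (upd_sum eta loss t0 a pp sp).
  have hb' : forall k i, (k < m)%N -> -1 <= loss (t0.+1 + k)%N i <= 1.
    by move=> k i hk; rewrite addSnnS; apply: hb.
  move=> /(_ hb'); rewrite mulrBl -/L -/C; lra.
rewrite (eq_bigr (fun a => p a * (gg u loss t0 a + Phi u (lb_update eta loss t0 p a) / eta)
   + p a * (m%:R * C - L / eta))); last by move=> a _; rewrite mulrDr.
rewrite big_split /= -mulr_suml sp mul1r.
have := one_step he up su pp sp hb0.
rewrite -/C mulrBl mulrSr; lra.
Qed.

Unset Implicit Arguments. Set Strict Implicit.

Theorem mainTheorem2 (R : realType) (K : nat) (hK : (0 < K)%N)
  (eta : R) (heta0 : 0 < eta) (heta1 : eta < 1)
  (T : nat) (hT : (1 <= T)%N) (loss : nat -> 'I_K -> R)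
  (hloss : forall t : nat, (1 <= t <= T)%N -> forall i : 'I_K,
      -1 <= loss t i <= 1) :
  (forall t : nat, (1 <= t <= T)%N -> forall h : (t.-1).-tuple 'I_K,
      (forall i : 'I_K, 0 < lb_pi eta loss h i) /\
      \sum_(i < K) lb_pi eta loss h i = 1) /\
  (forall istar : 'I_K,
      lb_expected_regret eta loss T istar
      <= 2 + K%:R * ln (T%:R) / eta + 2 * eta * T%:R / (1 - eta)).
Proof.
have he : 0 < eta < 1 by rewrite heta0 heta1.
have K0 : 0 < K%:R :> R by rewrite ltr0n.
have T0 : 0 < T%:R :> R by rewrite ltr0n.
have ip : forall j : 'I_K, 0 < @lb_init R K j by move=> j; rewrite /lb_init invr_gt0.
have is1 : \sum_(i < K) @lb_init R K i = 1.
  by rewrite /lb_init sumr_const card_ord -[_ *+ _]mulr_natr mulVf ?gt_eqF.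
split.
  move=> t /andP[t1 tT] h; rewrite /lb_pi.
  apply: pi_from_ok => // k i; rewrite size_tuple => hk.
  apply: hloss; apply/andP; split; first by rewrite add1n.
  by apply: leq_trans tT; rewrite add1n; case: t t1 hk {h} => //= t _ hk; rewrite ltnS ltnW.
move=> istar.
set u : 'I_K -> R := fun i => (if i == istar then 1 - T%:R^-1 else 0) + (K%:R * T%:R)^-1.
have T1 : 1 <= T%:R :> R by rewrite ler1n.
have iT : T%:R^-1 <= 1 :> R by rewrite invf_le1.
have KT0 : 0 < (K%:R * T%:R)^-1 :> R by rewrite invr_gt0 mulr_gt0.
have up : forall j, 0 < u j.
  move=> j; rewrite /u; case: eqP => _; lra.
have su : \sum_i u i = 1.
  rewrite /u big_split /= sumr_const card_ord.
  rewrite (bigD1 istar) //= eqxx big1 ?addr0; last by move=> i /negbTE ->.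
  rewrite -(mulr_natr (K%:R * T%:R)^-1 K).
  rewrite invfM mulrAC mulVf ?gt_eqF // mul1r; lra.
set g := gg u loss.
have round : forall n : 'I_T, lb_round_regret eta loss n istar =
    Ef eta loss g 1 (@lb_init R K) n +
    (\sum_i u i * loss n.+1 i - loss n.+1 istar).
  move=> n; rewrite /lb_round_regret /Ef.
  rewrite (eq_bigr (fun h : n.+1.-tuple 'I_K => lb_prob eta loss h * g (1 + n)%N (tnth h ord_max)
     + lb_prob eta loss h * (\sum_i u i * loss n.+1 i - loss n.+1 istar))); last first.
    by move=> h _; rewrite /g /gg add1n; ring.
  rewrite big_split /= -mulr_suml /lb_prob.
  rewrite (@prob_sum R K eta loss he n.+1 1 (@lb_init R K) ip is1) ?mul1r //.
  move=> k i hk; apply: hloss; rewrite add1n /=; apply: leq_trans (ltn_ord n).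
  by rewrite ltnS.
rewrite /lb_expected_regret; under eq_bigr => n _ do rewrite round.
rewrite big_split /=.
have hm := @main_ind R K eta loss u he up su T 1 (@lb_init R K) ip is1.
have hm' : \sum_(n < T) Ef eta loss g 1 (@lb_init R K) n <=
   (Phi u (@lb_init R K) - \sum_i (1 + ln (u i))) / eta + T%:R * (2 * eta / (1 - eta)).
  apply: hm => k i hk; apply: hloss; rewrite add1n hk andbT //.
have hr : \sum_(n < T) (\sum_i u i * loss n.+1 i - loss n.+1 istar) <= 2.
  apply: (le_trans (y := \sum_(n < T) (2 / T%:R))).
    apply: ler_sum => n _.
    have hb : forall i, -1 <= loss n.+1 i <= 1.
      by move=> i; apply: hloss; rewrite ltn_ord.
    rewrite /u (eq_bigr (fun i => (if i == istar then (1 - T%:R^-1) * loss n.+1 i else 0)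
        + (K%:R * T%:R)^-1 * loss n.+1 i)); last first.
      by move=> i _; case: eqP => _; ring.
    rewrite big_split /= (bigD1 istar) //= eqxx big1 ?addr0; last by move=> i /negbTE ->.
    rewrite -mulr_sumr.
    have hs : \sum_i loss n.+1 i <= K%:R.
      apply: (le_trans (y := \sum_(i < K) (1 : R))).
        by apply: ler_sum => i _; case/andP: (hb i).
      by rewrite sumr_const card_ord.
    have := hb istar => /andP[b1 b2].
    have : (K%:R * T%:R)^-1 * \sum_i loss n.+1 i <= (K%:R * T%:R)^-1 * K%:R.
      by rewrite ler_wpM2l // ltW.
    have -> : (K%:R * T%:R)^-1 * K%:R = T%:R^-1 :> R.
      by rewrite invfM mulrAC mulVf ?gt_eqF // mul1r.
    have : 0 <= T%:R^-1 :> R by rewrite invr_ge0 ltW.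
    have -> : 2 / T%:R = T%:R^-1 + T%:R^-1 :> R by ring.
    nra.
  rewrite sumr_const card_ord -(mulr_natr (2 / T%:R) T).
  by rewrite divfK ?gt_eqF.
have hp : Phi u (@lb_init R K) - \sum_i (1 + ln (u i)) <= K%:R * ln T%:R.
  rewrite /Phi -sumrB.
  apply: (le_trans (y := \sum_(i < K) ((K%:R * u i - 1) + ln T%:R))).
    apply: ler_sum => i _; rewrite /lb_init invrK.
    suff : ln (K%:R^-1) <= ln T%:R + ln (u i) by lra.
    rewrite -lnM ?posrE // ler_ln ?posrE ?invr_gt0 ?mulr_gt0 //.
    rewrite /u; apply: (le_trans (y := T%:R * (K%:R * T%:R)^-1)).
      by rewrite invfM mulrCA mulfV ?gt_eqF // mulr1.
    rewrite ler_wpM2l ?(ltW T0) // lerDr; case: eqP => _ //; lra.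
  by rewrite big_split /= sumrB -mulr_sumr su !sumr_const !card_ord mulr1 subrr add0r mulr_natl.
have : (Phi u (@lb_init R K) - \sum_i (1 + ln (u i))) / eta <= K%:R * ln T%:R / eta.
  by rewrite ler_pM2r ?invr_gt0.
have -> : 2 * eta * T%:R / (1 - eta) = T%:R * (2 * eta / (1 - eta)) by ring.
lra.
Qed.
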